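(* Let $c\ge\sqrt2$ and fix $\lambda\in(0,1]$. There do not exist a treasure hunt algorithm with advice and a constant $C>0$ such that, for every regular terrain (with respect to $c$), every initial agent position $p$ and every treasure position $q$ with treasure accessibility $\lambda$, the advice given by the oracle has length less than $\frac12\log_2(L/\lambda)$ and the agent sees the treasure at cost at most $C\cdot L$, where $L$ is the length of a shortest path in the terrain from $p$ to $q$. In other words, accomplishing treasure hunt at cost $O(L)$ in regular terrains requires advice of size $\Omega(\log(L/\lambda))$.
   Context: Model. A terrain is $\mathcal{T}=P_0\setminus(P_1\cup\dots\cup P_k)$, where $P_0$ is a closed polygon and the obstacles $P_1,\dots,P_k$ are pairwise disjoint open polygons in the interior of $P_0$. The treasure is an interior point $q$ of $\mathcal{T}$; the agent is a point starting at $p\in\mathcal{T}$, with a compass and unit of length, moving along polygonal lines in $\mathcal{T}$ (free moves interrupted detectably upon hitting the boundary, and boundary moves along the boundary). An agent at $a$ sees $b$ if the segment $ab$ lies in $\mathcal{T}$ and has length at most $1$. The agent initially knows neither the terrain nor $q$. A treasure hunt algorithm with advice: an oracle knowing $\mathcal{T}$, $p$ and $q$ gives the agent a binary string (advice) before it starts; the agent's deterministic algorithm uses this string. The cost is the length of the agent's trajectory until it first sees the treasure. The accessibility of the treasure is $\lambda=\min(1,\rho)$, $\rho$ being the largest radius of a disc centered at $q$ contained in $\mathcal{T}$. A polygon is $c$-fat if the ratio of the radius of the smallest disc containing it to the radius of the largest disc contained in it is at most $c$; a terrain is regular if $P_0$ is convex and all obstacles are convex and $c$-fat. *)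

(* Defs.v *)
From Stdlib Require Import Reals Lra List.
Open Scope R_scope.

Definition point := (R * R)%type.
Definition padd (a b : point) : point := (fst a + fst b, snd a + snd b).
Definition psub (a b : point) : point := (fst a - fst b, snd a - snd b).
Definition pscale (t : R) (a : point) : point := (t * fst a, t * snd a).
Definition pzero : point := (0, 0).
Definition dist (a b : point) : R :=
  sqrt ((fst a - fst b) ^ 2 + (snd a - snd b) ^ 2).

Definition log2 (x : R) : R := ln x / ln 2.

Fixpoint sumR (w : list R) : R :=
  match w with nil => 0 | a :: w' => a + sumR w' end.

Fixpoint combo (w : list R) (l : list point) : point :=
  match w, l with
  | a :: w', y :: l' => padd (pscale a y) (combo w' l')
  | _, _ => pzero
  end.

Definition in_hull (l : list point) (x : point) : Prop :=
  exists w : list R, length w = length l /\ Forall (fun a => 0 <= a) w /\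
    sumR w = 1 /\ x = combo w l.

Definition pinterior (S : point -> Prop) (x : point) : Prop :=
  exists r, 0 < r /\ forall y, dist x y < r -> S y.

Definition closed_cpoly (l : list point) : point -> Prop := in_hull l.
Definition open_cpoly (l : list point) : point -> Prop := pinterior (in_hull l).
Definition nondegenerate (l : list point) : Prop := exists x, open_cpoly l x.

(* P0 = closed convex polygon tP0, obstacles = open convex polygons tObs. *)
Record terrain := Terrain { tP0 : list point; tObs : list (list point) }.

Definition in_terrain (T : terrain) (x : point) : Prop :=
  closed_cpoly (tP0 T) x /\ Forall (fun O => ~ open_cpoly O x) (tObs T).

Definition wf_terrain (T : terrain) : Prop :=
  nondegenerate (tP0 T) /\
  Forall nondegenerate (tObs T) /\
  Forall (fun O => forall x, open_cpoly O x -> pinterior (closed_cpoly (tP0 T)) x)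
    (tObs T) /\
  (forall i j, (i < j < length (tObs T))%nat -> forall x,
     ~ (open_cpoly (nth i (tObs T) nil) x /\ open_cpoly (nth j (tObs T) nil) x)).

Definition min_enclosing_radius (S : point -> Prop) (R0 : R) : Prop :=
  (exists z, forall x, S x -> dist z x <= R0) /\
  (forall z R1, (forall x, S x -> dist z x <= R1) -> R0 <= R1).

Definition max_inscribed_radius (S : point -> Prop) (r0 : R) : Prop :=
  (exists z, forall x, dist z x < r0 -> S x) /\
  (forall z r1, (forall x, dist z x < r1 -> S x) -> r1 <= r0).

Definition c_fat (c : R) (S : point -> Prop) : Prop :=
  exists R0 r0, min_enclosing_radius S R0 /\ max_inscribed_radius S r0 /\
    R0 / r0 <= c.

(* regular terrain w.r.t. c: P0 convex, obstacles convex (automatic here,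
   polygons are convex hulls) and c-fat *)
Definition regular (c : R) (T : terrain) : Prop :=
  wf_terrain T /\ Forall (fun O => c_fat c (open_cpoly O)) (tObs T).

Definition seg_in (T : terrain) (a b : point) : Prop :=
  forall t, 0 <= t <= 1 -> in_terrain T (padd a (pscale t (psub b a))).

Definition sees (T : terrain) (a b : point) : Prop :=
  seg_in T a b /\ dist a b <= 1.

Definition max_free_radius (T : terrain) (q : point) (rho : R) : Prop :=
  (forall x, dist q x <= rho -> in_terrain T x) /\
  (forall r, (forall x, dist q x <= r -> in_terrain T x) -> r <= rho).

Definition accessibility (T : terrain) (q : point) (lam : R) : Prop :=
  exists rho, max_free_radius T q rho /\ lam = Rmin 1 rho.

Fixpoint ppath (T : terrain) (a : point) (l : list point) (b : point) : Prop :=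
  match l with
  | nil => seg_in T a b
  | x :: l' => seg_in T a x /\ ppath T x l' b
  end.

Fixpoint plen (a : point) (l : list point) (b : point) : R :=
  match l with
  | nil => dist a b
  | x :: l' => dist a x + plen x l' b
  end.

Definition shortest_length (T : terrain) (p q : point) (L : R) : Prop :=
  (exists l, ppath T p l q /\ plen p l q = L) /\
  (forall l, ppath T p l q -> L <= plen p l q).

Definition advice := list bool.
Definition oracle := terrain -> point -> point -> advice.
(* Given the advice, the terrain and the start p, the agent's trajectory,
   in coordinates relative to p, parametrized by arc length (time s >= 0). *)
Definition algorithm := advice -> terrain -> point -> (R -> point).

Definition unit_speed_polygonal (g : R -> point) : Prop :=
  g 0 = pzero /\
  exists tau : nat -> R, tau 0%nat = 0 /\
    (forall i, tau i < tau (S i)) /\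
    (forall M, exists i, M <= tau i) /\
    (forall i, dist (g (tau i)) (g (tau (S i))) = tau (S i) - tau i) /\
    (forall i s, tau i <= s <= tau (S i) ->
       g s = padd (g (tau i))
               (pscale ((s - tau i) / (tau (S i) - tau i))
                       (psub (g (tau (S i))) (g (tau i))))).

(* what the agent perceives at relative position x: the set of points it
   sees, in coordinates relative to the start p *)
Definition perceived (T : terrain) (p x y : point) : Prop :=
  sees T (padd p x) (padd p y).

Definition valid_algorithm (c : R) (A : algorithm) : Prop :=
  (forall a T p, regular c T -> in_terrain T p ->
     unit_speed_polygonal (A a T p) /\
     forall s, 0 <= s -> in_terrain T (padd p (A a T p s))) /\
  (* determinism: the trajectory up to time t depends only on the advice
     and on what was perceived along it up to time t *)
  (forall a T1 p1 T2 p2 t, regular c T1 -> in_terrain T1 p1 ->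
     regular c T2 -> in_terrain T2 p2 -> 0 <= t ->
     (forall s, 0 <= s <= t -> forall y,
        perceived T1 p1 (A a T1 p1 s) y <-> perceived T2 p2 (A a T1 p1 s) y) ->
     forall s, 0 <= s <= t -> A a T2 p2 s = A a T1 p1 s).

(* Main.v *)
Require Import Defs.
From Stdlib Require Import Reals List.
From Stdlib Require Import Lra ZArith Lia.
Require Stdlib.Reals.Rgeom.
From Stdlib Require Import ClassicalEpsilon.
Import Defs.
Open Scope R_scope.

Lemma sqrt_le_bound (s R0 : R) : 0 <= R0 -> s <= R0 ^ 2 -> sqrt s <= R0.
Proof. intros H1 H2. rewrite <- (sqrt_pow2 R0 H1). now apply sqrt_le_1_alt. Qed.

Lemma dist_sym a b : dist a b = dist b a.
Proof. unfold dist. f_equal. ring. Qed.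

Lemma dist_ge0 a b : 0 <= dist a b.
Proof. apply sqrt_pos. Qed.

Lemma dist_triangle a b c : dist a c <= dist a b + dist b c.
Proof.
  destruct a as [a1 a2], b as [b1 b2], c as [c1 c2]. unfold dist; cbn [fst snd].
  pose proof (Rgeom.triangle a1 a2 c1 c2 b1 b2) as H.
  unfold Rgeom.dist_euc, Rsqr in H.
  replace ((a1 - c1) ^ 2 + (a2 - c2) ^ 2) with ((a1 - c1) * (a1 - c1) + (a2 - c2) * (a2 - c2)) by ring.
  replace ((a1 - b1) ^ 2 + (a2 - b2) ^ 2) with ((a1 - b1) * (a1 - b1) + (a2 - b2) * (a2 - b2)) by ring.
  replace ((b1 - c1) ^ 2 + (b2 - c2) ^ 2) with ((b1 - c1) * (b1 - c1) + (b2 - c2) * (b2 - c2)) by ring.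
  exact H.
Qed.

Lemma dist_x a b : Rabs (fst a - fst b) <= dist a b.
Proof.
  unfold dist. rewrite <- (sqrt_pow2 (Rabs (fst a - fst b))) by apply Rabs_pos.
  apply sqrt_le_1_alt. pose proof (pow2_ge_0 (snd a - snd b)).
  rewrite pow2_abs. lra.
Qed.

Lemma dist_y a b : Rabs (snd a - snd b) <= dist a b.
Proof.
  unfold dist. rewrite <- (sqrt_pow2 (Rabs (snd a - snd b))) by apply Rabs_pos.
  apply sqrt_le_1_alt. pose proof (pow2_ge_0 (fst a - fst b)).
  rewrite pow2_abs. lra.
Qed.

Lemma dist_le_coords a b k : 0 <= k -> Rabs (fst a - fst b) <= k -> Rabs (snd a - snd b) <= k ->
  dist a b <= k * sqrt 2.
Proof.
  intros H0 H1 H2. unfold dist. rewrite <- (sqrt_pow2 k H0), <- sqrt_mult by (try apply pow2_ge_0; lra).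
  apply sqrt_le_1_alt.
  rewrite <- (pow2_abs (fst a - fst b)), <- (pow2_abs (snd a - snd b)).
  pose proof (Rabs_pos (fst a - fst b)). pose proof (Rabs_pos (snd a - snd b)). nra.
Qed.

Lemma dist_translate p x y : dist (padd p x) (padd p y) = dist x y.
Proof. unfold dist, padd; cbn [fst snd]. f_equal. ring. Qed.

Lemma dist_seg a b t : dist a (padd a (pscale t (psub b a))) = Rabs t * dist a b.
Proof.
  unfold dist, padd, pscale, psub; cbn [fst snd].
  replace ((fst a - (fst a + t * (fst b - fst a))) ^ 2 + (snd a - (snd a + t * (snd b - snd a))) ^ 2)
    with (t ^ 2 * ((fst a - fst b) ^ 2 + (snd a - snd b) ^ 2)) by ring.
  rewrite sqrt_mult; [| apply pow2_ge_0 | apply Rplus_le_le_0_compat; apply pow2_ge_0].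
  rewrite <- pow2_abs, sqrt_pow2 by apply Rabs_pos. reflexivity.
Qed.

Lemma dist_seg2 a v u u' :
  dist (padd a (pscale u v)) (padd a (pscale u' v)) = Rabs (u - u') * dist v pzero.
Proof.
  unfold dist, padd, pscale, pzero; cbn [fst snd].
  replace ((fst a + u * fst v - (fst a + u' * fst v)) ^ 2 + (snd a + u * snd v - (snd a + u' * snd v)) ^ 2)
    with ((u - u') ^ 2 * ((fst v - 0) ^ 2 + (snd v - 0) ^ 2)) by ring.
  rewrite sqrt_mult; [| apply pow2_ge_0 | apply Rplus_le_le_0_compat; apply pow2_ge_0].
  rewrite <- pow2_abs, sqrt_pow2 by apply Rabs_pos. reflexivity.
Qed.

Lemma dist_self a : dist a a = 0.
Proof. unfold dist. replace ((fst a - fst a) ^ 2 + (snd a - snd a) ^ 2) with 0 by ring. apply sqrt_0. Qed.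

Lemma dist_psub b a : dist (psub b a) pzero = dist b a.
Proof. unfold dist, psub, pzero; cbn [fst snd]. f_equal. ring. Qed.

Lemma usp_lip g : unit_speed_polygonal g ->
  forall s s', 0 <= s -> s <= s' -> dist (g s) (g s') <= s' - s.
Proof.
  intros [H0 [tau [Ht0 [Hinc [Hunb [Hd Hlin]]]]]].
  assert (mono : forall i k, tau i <= tau (i + k)%nat).
  { intros i k; induction k. rewrite Nat.add_0_r; lra.
    replace (i + S k)%nat with (S (i + k)) by lia. pose proof (Hinc (i + k)%nat); lra. }
  assert (seg : forall s, 0 <= s -> exists i, tau i <= s <= tau (S i)).
  { intros s Hs. destruct (Hunb s) as [n Hn]. revert Hn. induction n; intros Hn.
    - exists 0%nat. pose proof (Hinc 0%nat). lra.
    - destruct (Rle_dec s (tau n)) as [Hle|Hgt]. now apply IHn. exists n. lra. }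
  assert (within : forall i s s', tau i <= s <= tau (S i) -> tau i <= s' <= tau (S i) ->
            dist (g s) (g s') = Rabs (s - s')).
  { intros i s s' Hs Hs'. rewrite (Hlin i s Hs), (Hlin i s' Hs'), dist_seg2, dist_psub.
    rewrite dist_sym, Hd. pose proof (Hinc i).
    replace ((s - tau i) / (tau (S i) - tau i) - (s' - tau i) / (tau (S i) - tau i))
      with ((s - s') / (tau (S i) - tau i)) by (field; lra).
    unfold Rdiv. rewrite Rabs_mult, Rabs_inv, (Rabs_right (tau (S i) - tau i)) by lra.
    field. lra. }
  assert (chain : forall (k i : nat) (s s' : R), tau i <= s <= tau (S i) -> tau (i + k)%nat <= s' <= tau (S (i + k)) ->
            s <= s' -> dist (g s) (g s') <= s' - s).
  { induction k; intros i s s' Hs Hs' Hle.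
    - rewrite Nat.add_0_r in Hs'. rewrite (within i s s' Hs Hs'). rewrite Rabs_left1; lra.
    - set (t := tau (i + S k)%nat).
      assert (Hst : s <= t). { pose proof (mono (S i) k). unfold t. replace (i + S k)%nat with (S i + k)%nat by lia. lra. }
      assert (H1 : dist (g s) (g t) <= t - s).
      { apply (IHk i); auto. unfold t. replace (i + S k)%nat with (S (i + k)) by lia. pose proof (Hinc (i+k)%nat). lra. }
      assert (H2 : dist (g t) (g s') = Rabs (t - s')).
      { apply (within (i + S k)%nat). unfold t. pose proof (Hinc (i+S k)%nat). lra. lra. }
      pose proof (dist_triangle (g s) (g t) (g s')). all: try (subst t).  rewrite Rabs_left1 in H2; lra. }
  intros s s' Hs Hss'.
  destruct (seg s Hs) as [i Hi]. destruct (seg s' ltac:(lra)) as [j Hj].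
  destruct (le_lt_dec i j) as [Hij|Hij].
  - apply (chain (j - i)%nat i); auto. replace (i + (j - i))%nat with j by lia. auto.
  - pose proof (mono (S j) (i - S j)%nat). replace (S j + (i - S j))%nat with i in H by lia.
    assert (s = s') by lra. subst. rewrite dist_self. lra.
Qed.

Lemma usp_lip_abs g : unit_speed_polygonal g ->
  forall s s', 0 <= s -> 0 <= s' -> dist (g s) (g s') <= Rabs (s - s').
Proof.
  intros Hg s s' Hs Hs'. destruct (Rle_dec s s').
  - rewrite Rabs_left1 by lra. pose proof (usp_lip g Hg s s'). lra.
  - rewrite Rabs_right by lra. rewrite dist_sym. pose proof (usp_lip g Hg s' s). lra.
Qed.

Definition box (a b c d : R) : list point := (a,c)::(b,c)::(b,d)::(a,d)::nil.

Lemma hull_box a b c d z : a <= b -> c <= d -> in_hull (box a b c d) z ->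
  (a <= fst z <= b /\ c <= snd z <= d).
Proof.
  intros Hab Hcd [w [Hl [Hf [Hs Hz]]]].
  destruct w as [|w1 [|w2 [|w3 [|w4 [|w5 w]]]]]; cbn in Hl; try discriminate.
  inversion Hf as [|? ? H1 Hf1]; subst. inversion Hf1 as [|? ? H2 Hf2]; subst.
  inversion Hf2 as [|? ? H3 Hf3]; subst. inversion Hf3 as [|? ? H4 Hf4]; subst.
  cbn in Hs. unfold box, combo, padd, pscale, pzero; cbn [fst snd].
  split; split; nra.
Qed.

Lemma box_hull a b c d x y : a < b -> c < d -> a <= x <= b -> c <= y <= d ->
  in_hull (box a b c d) (x, y).
Proof.
  intros Hab Hcd Hx Hy.
  set (u := (x - a) / (b - a)). set (v := (y - c) / (d - c)).
  assert (Hu : 0 <= u <= 1). { unfold u; split.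
    unfold Rdiv; apply Rmult_le_pos; [lra| left; apply Rinv_0_lt_compat; lra].
    apply (Rmult_le_reg_r (b - a)); [lra|]. unfold Rdiv. rewrite Rmult_assoc, Rinv_l; lra. }
  assert (Hv : 0 <= v <= 1). { unfold v; split.
    unfold Rdiv; apply Rmult_le_pos; [lra| left; apply Rinv_0_lt_compat; lra].
    apply (Rmult_le_reg_r (d - c)); [lra|]. unfold Rdiv. rewrite Rmult_assoc, Rinv_l; lra. }
  exists ((1-u)*(1-v) :: u*(1-v) :: u*v :: (1-u)*v :: nil). split; [reflexivity|].
  split. { repeat (constructor; [nra|]). constructor. }
  split. { cbn. ring. }
  unfold box, combo, padd, pscale, pzero; cbn [fst snd]. f_equal.
  - unfold u. field. lra.
  - unfold v. field. lra.
Qed.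

Lemma abs_bounds x k : Rabs x <= k -> -k <= x <= k.
Proof. unfold Rabs; destruct (Rcase_abs x); lra. Qed.

Definition obox (a b c d : R) (z : point) : Prop := a < fst z < b /\ c < snd z < d.

Lemma dist_shift_x z t : dist z (fst z + t, snd z) = Rabs t.
Proof. unfold dist; cbn [fst snd]. rewrite <- (sqrt_pow2 (Rabs t)) by apply Rabs_pos.
  f_equal. rewrite pow2_abs. ring. Qed.
Lemma dist_shift_y z t : dist z (fst z, snd z + t) = Rabs t.
Proof. unfold dist; cbn [fst snd]. rewrite <- (sqrt_pow2 (Rabs t)) by apply Rabs_pos.
  f_equal. rewrite pow2_abs. ring. Qed.

Lemma open_cpoly_box a b c d z : a < b -> c < d ->
  (open_cpoly (box a b c d) z <-> obox a b c d z).
Proof.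
  intros Hab Hcd. unfold open_cpoly, pinterior, obox. split.
  - intros [r [Hr Hin]].
    assert (Px : forall t, Rabs t < r -> a <= fst z + t <= b).
    { intros t Ht. apply (hull_box a b c d (fst z + t, snd z)); try lra.
      apply Hin. rewrite dist_shift_x. exact Ht. }
    assert (Py : forall t, Rabs t < r -> c <= snd z + t <= d).
    { intros t Ht. apply (hull_box a b c d (fst z, snd z + t)); try lra.
      apply Hin. rewrite dist_shift_y. exact Ht. }
    assert (H1 : Rabs (r/2) < r) by (rewrite Rabs_right; lra).
    assert (H2 : Rabs (-(r/2)) < r) by (rewrite Rabs_Ropp, Rabs_right; lra).
    pose proof (Px _ H1). pose proof (Px _ H2). pose proof (Py _ H1). pose proof (Py _ H2). lra.
  - intros Hz.
    exists (Rmin (Rmin (fst z - a) (b - fst z)) (Rmin (snd z - c) (d - snd z))).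
    split. { repeat apply Rmin_glb_lt; lra. }
    intros y Hy. pose proof (dist_x z y). pose proof (dist_y z y).
    pose proof (Rmin_l (Rmin (fst z - a) (b - fst z)) (Rmin (snd z - c) (d - snd z))).
    pose proof (Rmin_r (Rmin (fst z - a) (b - fst z)) (Rmin (snd z - c) (d - snd z))).
    pose proof (Rmin_l (fst z - a) (b - fst z)). pose proof (Rmin_r (fst z - a) (b - fst z)).
    pose proof (Rmin_l (snd z - c) (d - snd z)). pose proof (Rmin_r (snd z - c) (d - snd z)).
    destruct y as [y1 y2]. cbn [fst snd] in *.
    apply box_hull; try lra.
    + apply abs_bounds in H. lra.
    + apply abs_bounds in H0. lra.
Qed.

Lemma closed_cpoly_box a b c d z : a < b -> c < d ->
  (closed_cpoly (box a b c d) z <-> (a <= fst z <= b /\ c <= snd z <= d)).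
Proof.
  intros Hab Hcd. unfold closed_cpoly. split.
  - apply hull_box; lra.
  - intros [Hx Hy]. destruct z. now apply box_hull.
Qed.

Lemma sqrt2_pos : 0 < sqrt 2.
Proof. apply sqrt_lt_R0; lra. Qed.

Lemma square_fat c a a' b b' h : sqrt 2 <= c -> 0 < h -> a' = a + 2 * h -> b' = b + 2 * h ->
  c_fat c (open_cpoly (box a a' b b')).
Proof.
  intros Hc Hh Ha Hb. pose proof sqrt2_pos as Hs.
  assert (HS : forall x, open_cpoly (box a a' b b') x <-> obox a a' b b' x)
    by (intros; apply open_cpoly_box; lra).
  exists (h * sqrt 2), h. split; [|split].
  - split.
    + exists (a + h, b + h). intros x Hx. apply HS in Hx. destruct Hx as [Hx1 Hx2].
      apply dist_le_coords; [lra| |]; cbn [fst snd]; apply Rabs_le; lra.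
    + intros z R1 HR.
      assert (HR0 : 0 <= R1).
      { apply Rle_trans with (dist z (a + h, b + h)). apply dist_ge0. apply HR, HS. unfold obox; cbn; lra. }
      assert (Heps : forall e, 0 < e < h -> (h - e) * sqrt 2 <= R1).
      { intros e He.
        assert (H1 : dist z (a + e, b + e) <= R1) by (apply HR, HS; unfold obox; cbn; lra).
        assert (H2 : dist z (a' - e, b' - e) <= R1) by (apply HR, HS; unfold obox; cbn; lra).
        assert (H3 : dist (a + e, b + e) (a' - e, b' - e) = (2 * h - 2 * e) * sqrt 2).
        { unfold dist; cbn [fst snd]. rewrite <- (sqrt_pow2 (2 * h - 2 * e)) by lra.
          rewrite <- sqrt_mult by (try apply pow2_ge_0; lra). f_equal. subst. ring. }
        pose proof (dist_triangle (a + e, b + e) z (a' - e, b' - e)). rewrite (dist_sym (a + e, b + e) z) in H.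
        lra. }
      destruct (Rle_dec (h * sqrt 2) R1) as [Hle|Hgt]; [exact Hle|exfalso].
      set (e := (h * sqrt 2 - R1) / (2 * sqrt 2)).
      assert (He1 : 0 < e). { unfold e. apply Rdiv_lt_0_compat; lra. }
      assert (He2 : e <= h / 2).
      { unfold e. apply (Rmult_le_reg_r (2 * sqrt 2)); [lra|].
        unfold Rdiv. rewrite Rmult_assoc, Rinv_l by lra. nra. }
      pose proof (Heps e ltac:(lra)).
      assert ((h - e) * sqrt 2 = h * sqrt 2 - (h * sqrt 2 - R1) / 2) by (unfold e; field; lra).
      lra.
  - split.
    + exists (a + h, b + h). intros x Hx. apply HS. pose proof (dist_x (a + h, b + h) x).
      pose proof (dist_y (a + h, b + h) x). cbn [fst snd] in *.
      apply abs_bounds in H. apply abs_bounds in H0. unfold obox. lra.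
    + intros z r1 Hr. destruct (Rle_dec r1 h) as [Hle|Hgt]; [exact Hle|exfalso].
      assert (H1 : obox a a' b b' (fst z + h, snd z)).
      { apply HS, Hr. rewrite dist_shift_x, Rabs_right; lra. }
      assert (H2 : obox a a' b b' (fst z + - h, snd z)).
      { apply HS, Hr. rewrite dist_shift_x, Rabs_left; lra. }
      unfold obox in *; cbn [fst snd] in *. lra.
  - replace (h * sqrt 2 / h) with (sqrt 2) by (field; lra). exact Hc.
Qed.

Section Terr.
Variables (lam M c : R).
Hypothesis Hlam : 0 < lam <= 1.
Hypothesis HM : 2 <= M.
Hypothesis Hc : sqrt 2 <= c.

Definition P0 := box (-M) M (-M) M.
Definition T0 := Terrain P0 nil.
Definition Ob (q : point) := box (fst q + lam) (fst q + lam + 1/2) (snd q - 1/4) (snd q + 1/4).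
Definition Tq (q : point) := Terrain P0 (Ob q :: nil).

Definition HQ (q : point) := 0 <= fst q /\ 0 <= snd q /\ fst q + 2 <= M /\ snd q + 2 <= M.

Lemma in_P0 z : closed_cpoly P0 z <-> (-M <= fst z <= M /\ -M <= snd z <= M).
Proof. apply closed_cpoly_box; lra. Qed.

Lemma in_Ob q z : open_cpoly (Ob q) z <-> obox (fst q + lam) (fst q + lam + 1/2) (snd q - 1/4) (snd q + 1/4) z.
Proof. apply open_cpoly_box; lra. Qed.

Lemma in_T0 z : in_terrain T0 z <-> closed_cpoly P0 z.
Proof. unfold in_terrain; cbn. split; [tauto|]. intros; split; auto. Qed.

Lemma in_Tq q z : in_terrain (Tq q) z <-> (closed_cpoly P0 z /\ ~ open_cpoly (Ob q) z).
Proof. unfold in_terrain; cbn. rewrite Forall_cons_iff. split; [tauto|]. intros [H1 H2]; repeat split; auto. Qed.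

Lemma nondeg_P0 : nondegenerate P0.
Proof. exists (0,0). unfold P0. apply open_cpoly_box; try lra. unfold obox; cbn; lra. Qed.

Lemma regular_T0 : regular c T0.
Proof.
  split; [|constructor]. split; [apply nondeg_P0|]. split; [constructor|]. split; [constructor|].
  intros i j Hij. cbn in Hij. lia.
Qed.

Lemma regular_Tq q : HQ q -> regular c (Tq q).
Proof.
  intros [H1 [H2 [H3 H4]]]. split.
  - split; [apply nondeg_P0|]. split.
    { constructor; [|constructor]. exists (fst q + lam + 1/4, snd q). apply in_Ob. unfold obox; cbn; lra. }
    split.
    { constructor; [|constructor]. intros x Hx. apply in_Ob in Hx.
      assert (obox (-M) M (-M) M x) by (unfold obox in *; lra).
      apply (open_cpoly_box (-M) M (-M) M x) in H; try lra. exact H. }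
    intros i j Hij. cbn in Hij. lia.
  - constructor; [|constructor]. apply (square_fat c _ _ _ _ (1/4)); auto; lra.
Qed.

Lemma disc_in q x : HQ q -> dist q x <= lam -> in_terrain (Tq q) x.
Proof.
  intros [H1 [H2 [H3 H4]]] Hd. pose proof (dist_x q x). pose proof (dist_y q x).
  apply abs_bounds in H. apply abs_bounds in H0.
  apply in_Tq. split. { apply in_P0. lra. }
  intros Ho. apply in_Ob in Ho. unfold obox in Ho. lra.
Qed.

Lemma access_q q : HQ q -> accessibility (Tq q) q lam.
Proof.
  intros HQq. exists lam. split; [split|].
  - intros x Hx. now apply disc_in.
  - intros r Hr. destruct (Rle_dec r lam) as [Hle|Hgt]; [exact Hle|exfalso].
    set (t := Rmin r (lam + 1/4)).
    assert (Ht1 : t <= r) by apply Rmin_l. assert (Ht2 : t <= lam + 1/4) by apply Rmin_r.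
    assert (Ht3 : lam < t) by (apply Rmin_glb_lt; lra).
    assert (Hin : in_terrain (Tq q) (fst q + t, snd q)).
    { apply Hr. rewrite dist_shift_x, Rabs_right; lra. }
    apply in_Tq in Hin. destruct Hin as [_ Hn]. apply Hn, in_Ob. unfold obox; cbn; lra.
  - unfold Rmin. destruct (Rle_dec 1 lam); lra.
Qed.

Lemma interior_q q : HQ q -> pinterior (in_terrain (Tq q)) q.
Proof. intros HQq. exists lam. split; [lra|]. intros y Hy. apply disc_in; auto; lra. Qed.

Lemma p_in_T0 : in_terrain T0 (0,0).
Proof. apply in_T0, in_P0. cbn. lra. Qed.

Lemma p_in_Tq q : HQ q -> in_terrain (Tq q) (0,0).
Proof. intros [H1 [H2 [H3 H4]]]. apply in_Tq. split. apply in_P0; cbn; lra.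
  intros Ho. apply in_Ob in Ho. unfold obox in Ho; cbn in Ho. lra. Qed.

Lemma plen_ge a l b : dist a b <= plen a l b.
Proof.
  revert a. induction l as [|x l IH]; intros a; cbn [plen]. lra.
  pose proof (IH x). pose proof (dist_triangle a x b). lra.
Qed.

Lemma shortest_q q : HQ q -> shortest_length (Tq q) (0,0) q (dist (0,0) q).
Proof.
  intros [H1 [H2 [H3 H4]]]. split.
  - exists nil. split; [|reflexivity]. cbn. intros t Ht. apply in_Tq.
    unfold padd, pscale, psub; cbn [fst snd]. split.
    + apply in_P0. cbn [fst snd]. nra.
    + intros Ho. apply in_Ob in Ho. unfold obox in Ho; cbn [fst snd] in Ho. nra.
  - intros l _. apply plen_ge.
Qed.

Lemma Ob_near q z : open_cpoly (Ob q) z -> dist q z < 2.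
Proof.
  intros Ho. apply in_Ob in Ho. unfold obox in Ho. unfold dist.
  rewrite <- (sqrt_pow2 2) by lra. apply sqrt_lt_1_alt. split.
  - apply Rplus_le_le_0_compat; apply pow2_ge_0.
  - nra.
Qed.

Lemma perception q x z : 3 < dist x q -> (sees T0 x z <-> sees (Tq q) x z).
Proof.
  intros Hx. unfold sees. split; intros [Hs Hd]; split; auto; intros t Ht; specialize (Hs t Ht).
  - apply in_T0 in Hs. apply in_Tq. split; auto. intros Ho. apply Ob_near in Ho.
    pose proof (dist_seg x z t). rewrite Rabs_right in H by lra.
    pose proof (dist_triangle x (padd x (pscale t (psub z x))) q).
    rewrite (dist_sym (padd x (pscale t (psub z x))) q) in H0.
    assert (t * dist x z <= 1) by (pose proof (dist_ge0 x z); nra). lra.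
  - apply in_T0. apply in_Tq in Hs. tauto.
Qed.
End Terr.

Fixpoint code (l : list bool) : nat :=
  match l with nil => 1%nat | b :: l' => (2 * code l' + (if b then 1 else 0))%nat end.

Lemma code_pos l : (1 <= code l)%nat.
Proof. induction l; cbn; [lia|]. destruct a; lia. Qed.

Lemma code_inj l1 l2 : code l1 = code l2 -> l1 = l2.
Proof.
  revert l2; induction l1 as [|b1 l1 IH]; intros [|b2 l2]; cbn; intros H; auto.
  - pose proof (code_pos l2). destruct b2; lia.
  - pose proof (code_pos l1). destruct b1; lia.
  - destruct b1, b2; try lia; f_equal; apply IH; lia.
Qed.

Lemma code_lt l : (code l < 2 ^ (length l + 1))%nat.
Proof.
  induction l as [|b l IH]; cbn [code length]. cbn; lia.
  replace (S (length l) + 1)%nat with (S (length l + 1)) by lia. rewrite Nat.pow_succ_r'. destruct b; lia.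
Qed.

Definition nfloor (t : R) : nat := Z.to_nat (Int_part t).

Lemma nfloor_spec t : 0 <= t -> INR (nfloor t) <= t < INR (nfloor t) + 1.
Proof.
  intros Ht. destruct (base_Int_part t) as [H1 H2].
  assert (Hz : (0 <= Int_part t)%Z).
  { assert (-1 < IZR (Int_part t)) by lra. apply lt_IZR in H. lia. }
  unfold nfloor. rewrite INR_IZR_INZ, Z2Nat.id by exact Hz. lra.
Qed.

Lemma pow2_ge n : INR n <= 2 ^ n.
Proof.
  induction n. cbn; lra. rewrite S_INR. cbn [pow].
  pose proof (pow_R1_Rle 2 n ltac:(lra)). lra.
Qed.

Lemma ln_le' x y : 0 < x -> x <= y -> ln x <= ln y.
Proof. intros Hx [H|H]. left; now apply ln_increasing. subst; lra. Qed.

Lemma nat_sep u u' : 8 * Rabs (INR u - INR u') < 7 -> u = u'.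
Proof.
  intros H. destruct (Nat.lt_total u u') as [Hl|[He|Hl]]; auto; exfalso.
  - apply le_INR in Hl. rewrite S_INR in Hl. rewrite Rabs_left in H; lra.
  - apply le_INR in Hl. rewrite S_INR in Hl. rewrite Rabs_right in H; lra.
Qed.

Lemma divmod_uniq (a b x y B : nat) : (a * B + x = b * B + y -> x < B -> y < B -> a = b /\ x = y)%nat.
Proof.
  intros H Hx Hy. destruct (Nat.lt_total a b) as [Hl|[He|Hl]].
  - exfalso. assert (S a * B <= b * B)%nat by (apply Nat.mul_le_mono_r; lia). cbn in H0. lia.
  - subst. lia.
  - exfalso. assert (S b * B <= a * B)%nat by (apply Nat.mul_le_mono_r; lia). cbn in H0. lia.
Qed.

Lemma INR2 : INR 2 = 2.
Proof. cbn. lra. Qed.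

Theorem theorem2p2 (c lam : R) (hc : sqrt 2 <= c) (hlam : 0 < lam <= 1) :
  ~ exists (A : algorithm) (O : oracle) (C : R),
      0 < C /\ valid_algorithm c A /\
      exists L0 : R,
        forall (T : terrain) (p q : point) (L : R),
          regular c T -> in_terrain T p -> pinterior (in_terrain T) q ->
          accessibility T q lam -> shortest_length T p q L ->
          (exists s, 0 <= s <= C * L /\
             sees T (padd p (A (O T p q) T p s)) q) /\
          (L0 <= L -> INR (length (O T p q)) < / 2 * log2 (L / lam)).
Proof.
  intros [A [O [C [HC [[Hval Hdet] [L0 Hmain]]]]]].
  destruct (INR_archimed 1 (18 * C + 1)) as [e He]; [lra|]. rewrite Rmult_1_r in He.
  destruct (INR_archimed 1 (Rmax L0 (18 * INR e / lam))) as [m Hm]; [lra|]. rewrite Rmult_1_r in Hm.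
  assert (H2m : Rmax L0 (18 * INR e / lam) < 2 ^ m) by (pose proof (pow2_ge m); lra).
  assert (HmL0 : L0 < 2 ^ m) by (pose proof (Rmax_l L0 (18 * INR e / lam)); lra).
  assert (Hme : 18 * INR e <= lam * 2 ^ m).
  { pose proof (Rmax_r L0 (18 * INR e / lam)).
    assert (18 * INR e / lam < 2 ^ m) by lra.
    apply (Rmult_lt_compat_l lam) in H0; [|lra].
    replace (lam * (18 * INR e / lam)) with (18 * INR e) in H0 by (field; lra). lra. }
  assert (Hpm : 1 <= 2 ^ m) by (apply pow_R1_Rle; lra).
  set (K := (2 ^ m * e)%nat).
  assert (HK : INR K = 2 ^ m * INR e) by (unfold K; rewrite mult_INR, pow_INR, INR2; reflexivity).
  assert (HK1 : 1 <= INR K) by (rewrite HK; nra).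
  assert (HXK : 2 ^ m <= INR K) by (rewrite HK; assert (1 < INR e) by lra; nra).
  assert (HK0 : K <> 0%nat) by (intro H0; rewrite H0 in HK1; cbn in HK1; lra).
  set (M := 16 * INR K + 10).
  assert (HM : 2 <= M) by (unfold M; lra).
  set (B := (nfloor (18 * C * INR K) + 1)%nat).
  assert (HB : INR B <= 18 * C * INR K + 1 /\ 18 * C * INR K < INR B).
  { unfold B. rewrite plus_INR. cbn [INR]. pose proof (nfloor_spec (18 * C * INR K)). 
    assert (0 <= 18 * C * INR K) by nra. lra. }
  set (p := (0, 0) : point).
  set (qn := fun n : nat => (8 * INR K + 8 * INR (n / K), 8 * INR (n mod K)) : point).
  assert (Hdiv : forall n, (n < K * K)%nat -> INR (n / K) + 1 <= INR K /\ INR (n mod K) + 1 <= INR K).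
  { intros n Hn. split.
    - assert (n / K < K)%nat by (apply Nat.Div0.div_lt_upper_bound; lia).
      rewrite <- S_INR. apply le_INR. lia.
    - assert (n mod K < K)%nat by (apply Nat.mod_upper_bound; lia).
      rewrite <- S_INR. apply le_INR. lia. }
  assert (HQn : forall n, (n < K * K)%nat -> HQ M (qn n)).
  { intros n Hn. destruct (Hdiv n Hn). pose proof (pos_INR (n / K)). pose proof (pos_INR (n mod K)).
    unfold HQ, qn, M; cbn [fst snd]. lra. }
  assert (HL : forall n, (n < K * K)%nat -> 8 * INR K <= dist p (qn n) <= 18 * INR K).
  { intros n Hn. destruct (Hdiv n Hn). pose proof (pos_INR (n / K)). pose proof (pos_INR (n mod K)). split.
    - pose proof (dist_x p (qn n)). unfold p, qn in *; cbn [fst snd] in *.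
      rewrite Rabs_left1 in H3 by lra. lra.
    - unfold dist. apply sqrt_le_bound; [lra|]. unfold p, qn; cbn [fst snd]. nra. }
  set (Tn := fun n => Tq lam M (qn n)).
  set (an := fun n => O (Tn n) p (qn n)).
  set (gn := fun n => A (an n) (T0 M) p).
  assert (R0 : regular c (T0 M)) by (apply regular_T0; lra).
  assert (I0 : in_terrain (T0 M) p) by (eapply p_in_T0; eauto).
  assert (Hg : forall a, unit_speed_polygonal (A a (T0 M) p)) by (intro a; apply (Hval a (T0 M) p R0 I0)).
  assert (Hn : forall n, (n < K * K)%nat ->
     (exists t, 0 <= t <= 18 * C * INR K /\ dist (padd p (gn n t)) (qn n) <= 3) /\ (length (an n) < m)%nat).
  { intros n Hn. pose proof (HQn n Hn) as HQq.
    assert (RT : regular c (Tn n)) by (eapply regular_Tq; eauto).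
    assert (IT : in_terrain (Tn n) p) by (eapply p_in_Tq; eauto).
    destruct (Hmain (Tn n) p (qn n) (dist p (qn n)) RT IT
      ltac:(eapply interior_q; eauto) ltac:(eapply access_q; eauto) ltac:(eapply shortest_q; eauto))
      as [[s [Hs Hsee]] Hlen].
    destruct (HL n Hn) as [HL1 HL2].
    split.
    - apply NNPP. intros Hno.
      assert (Hfar : forall t, 0 <= t <= s -> 3 < dist (padd p (gn n t)) (qn n)).
      { intros t Ht. apply Rnot_le_lt. intros Hle. apply Hno. exists t. split; [|exact Hle].
        split; [lra|]. apply Rle_trans with (C * dist p (qn n)); [lra|]. nra. }
      assert (Heq : A (an n) (Tn n) p s = A (an n) (T0 M) p s).
      { apply (Hdet (an n) (T0 M) p (Tn n) p s R0 I0 RT IT ltac:(lra)); [|lra].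
        intros s' Hs' y. unfold perceived. eapply perception; eauto. }
      fold (an n) in Hsee. rewrite Heq in Hsee. destruct Hsee as [_ Hd].
      pose proof (Hfar s ltac:(lra)). unfold gn in H. lra.
    - assert (Hl : INR (length (an n)) < / 2 * log2 (dist p (qn n) / lam)) by (apply Hlen; lra).
      assert (Hln2 : 0 < ln 2) by (rewrite <- ln_1; apply ln_increasing; lra).
      assert (Hq : dist p (qn n) / lam <= 2 ^ (2 * m)).
      { apply (Rmult_le_reg_r lam); [lra|]. unfold Rdiv. rewrite Rmult_assoc, Rinv_l, Rmult_1_r by lra.
        rewrite Nat.mul_comm, pow_mult. replace (2 ^ 2) with 4 by (cbn; ring).
        rewrite HK in HL2. replace (4 ^ m) with (2 ^ m * 2 ^ m) by (rewrite <- Rpow_mult_distr; f_equal; ring).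
        nra. }
      assert (Hlog : log2 (dist p (qn n) / lam) <= INR (2 * m)).
      { unfold log2. rewrite <- (Rmult_1_r (INR (2 * m))). rewrite <- (Rinv_r (ln 2)) by lra.
        rewrite <- Rmult_assoc. unfold Rdiv. apply Rmult_le_compat_r. left; apply Rinv_0_lt_compat; lra.
        rewrite <- ln_pow by lra. apply ln_le'; [|exact Hq].
        apply Rdiv_lt_0_compat; lra. }
      rewrite mult_INR in Hlog. cbn [INR] in Hlog.
      apply INR_lt. lra. }
  assert (Hch : forall n, exists t, (n < K * K)%nat -> 0 <= t <= 18 * C * INR K /\ dist (padd p (gn n t)) (qn n) <= 3).
  { intros n. destruct (lt_dec n (K * K)) as [Hl|Hl].
    - destruct (proj1 (Hn n Hl)) as [t Ht]. exists t. auto.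
    - exists 0. intros; lia. }
  set (f := fun n => proj1_sig (constructive_indefinite_description _ (Hch n))).
  assert (Hf : forall n, (n < K * K)%nat -> 0 <= f n <= 18 * C * INR K /\ dist (padd p (gn n (f n))) (qn n) <= 3).
  { intros n. exact (proj2_sig (constructive_indefinite_description _ (Hch n))). }
  set (phi := fun n => (code (an n) * B + nfloor (f n))%nat).
  assert (Hcode : forall n, (n < K * K)%nat -> (code (an n) < 2 ^ m)%nat).
  { intros n Hn0. pose proof (code_lt (an n)). pose proof (proj2 (Hn n Hn0)).
    assert (2 ^ (length (an n) + 1) <= 2 ^ m)%nat by (apply Nat.pow_le_mono_r; lia). lia. }
  assert (Hfl : forall n, (n < K * K)%nat -> (nfloor (f n) < B)%nat).
  { intros n Hn0. destruct (Hf n Hn0) as [Hf1 _]. pose proof (nfloor_spec (f n) ltac:(lra)).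
    apply INR_lt. lra. }
  assert (HND : NoDup (map phi (seq 0 (K * K)))).
  { apply NoDup_map_NoDup_ForallPairs; [|apply seq_NoDup].
    intros n1 n2 Hn1 Hn2 Heq. apply in_seq in Hn1. apply in_seq in Hn2.
    assert (Hn1' : (n1 < K * K)%nat) by lia. assert (Hn2' : (n2 < K * K)%nat) by lia.
    unfold phi in Heq. destruct (divmod_uniq _ _ _ _ _ Heq (Hfl n1 Hn1') (Hfl n2 Hn2')) as [Hc1 Hc2].
    apply code_inj in Hc1.
    destruct (Hf n1 Hn1') as [Hf1 Hd1]. destruct (Hf n2 Hn2') as [Hf2 Hd2].
    assert (Hgg : gn n2 = gn n1) by (unfold gn; rewrite Hc1; reflexivity).
    rewrite Hgg in Hd2.
    pose proof (nfloor_spec (f n1) ltac:(lra)). pose proof (nfloor_spec (f n2) ltac:(lra)).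
    rewrite Hc2 in H.
    assert (Habs : Rabs (f n1 - f n2) < 1) by (apply Rabs_def1; lra).
    pose proof (usp_lip_abs _ (Hg (an n1)) (f n1) (f n2) ltac:(lra) ltac:(lra)).
    fold (gn n1) in H1.
    rewrite <- (dist_translate p) in H1.
    pose proof (dist_triangle (qn n1) (padd p (gn n1 (f n1))) (qn n2)).
    pose proof (dist_triangle (padd p (gn n1 (f n1))) (padd p (gn n1 (f n2))) (qn n2)).
    rewrite dist_sym in Hd1.
    assert (Hq12 : dist (qn n1) (qn n2) < 7) by lra.
    assert (H4 : Rabs (fst (qn n1) - fst (qn n2)) < 7) by (pose proof (dist_x (qn n1) (qn n2)); lra).
    assert (H5 : Rabs (snd (qn n1) - snd (qn n2)) < 7) by (pose proof (dist_y (qn n1) (qn n2)); lra).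
    unfold qn in H4, H5; cbn [fst snd] in H4, H5.
    replace (8 * INR K + 8 * INR (n1 / K) - (8 * INR K + 8 * INR (n2 / K)))
      with (8 * (INR (n1 / K) - INR (n2 / K))) in H4 by ring.
    replace (8 * INR (n1 mod K) - 8 * INR (n2 mod K))
      with (8 * (INR (n1 mod K) - INR (n2 mod K))) in H5 by ring.
    rewrite Rabs_mult, (Rabs_right 8) in H4, H5 by lra.
    assert (E1 : (n1 / K = n2 / K)%nat) by (apply nat_sep; lra).
    assert (E2 : (n1 mod K = n2 mod K)%nat) by (apply nat_sep; lra).
    rewrite (Nat.div_mod_eq n1 K), (Nat.div_mod_eq n2 K), E1, E2. reflexivity. }
  assert (Hincl : incl (map phi (seq 0 (K * K))) (seq 0 (2 ^ m * B))).
  { intros x Hx. apply in_map_iff in Hx as [n [Hx Hn0]]. subst x. apply in_seq in Hn0.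
    apply in_seq. assert (Hn0' : (n < K * K)%nat) by lia.
    pose proof (Hcode n Hn0'). pose proof (Hfl n Hn0'). unfold phi.
    assert (code (an n) * B + B <= 2 ^ m * B)%nat.
    { replace (code (an n) * B + B)%nat with (S (code (an n)) * B)%nat by (cbn; lia).
      apply Nat.mul_le_mono_r; lia. }
    lia. }
  pose proof (NoDup_incl_length HND Hincl) as Hlen.
  rewrite length_map, !length_seq in Hlen.
  apply le_INR in Hlen. rewrite !mult_INR, pow_INR, INR2, HK in Hlen.
  destruct HB as [HB1 HB2]. rewrite HK in HB1.
  assert (HE : 1 < INR e) by (pose proof (Rmult_le_pos 18 C ltac:(lra) ltac:(lra)); lra).
  set (X := 2 ^ m) in *. set (E := INR e) in *.
  assert (X * E * E <= X * E * (18 * C) + 1).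
  { assert (X * (X * E * E) <= X * (X * E * (18 * C) + 1)).
    { apply Rle_trans with (X * E * (X * E)); [right; ring|].
      apply Rle_trans with (X * INR B); [exact Hlen|]. nra. }
    apply Rmult_le_reg_l in H; [exact H|lra]. }
  assert (X * E * (E - 18 * C) > 1) by nra.
  lra.
Qed.
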